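(* Let $\Lambda$ be a lattice of rank $s$ and $\bar a=(a_1,\ldots,a_l)\in(\mathcal F^0(\Lambda,\bar K))^l$. Suppose the convolution ideal generated by $a_1,\ldots,a_l$ in $\mathcal F^0(\Lambda,\bar K)$ contains $s$ nonzero functions $b_1,\ldots,b_s$ with $\mathrm{supp}(b_j)\subseteq\mathbb Zv_j$, $j=1,\ldots,s$, where $v_1,\ldots,v_s\in\Lambda$ are linearly independent. Then every $f\in\bigcap_{j=1}^l\ker(\Delta_{a_j})$ is pluri-periodic, and its period lattice $\Lambda(f)$ contains a rank $s$ sublattice $\sum_{j=1}^sm_j\mathbb Zv_j$ with integers $m_j>0$ depending only on $\bar a$.
   Context: $K=\mathrm{GF}(p^r)$, $\bar K$ an algebraic closure; a lattice is a free abelian group of finite rank. $\mathcal F^0(\Lambda,\bar K)$ is the ring of finitely supported functions $\Lambda\to\bar K$ under convolution $(f*a)(v)=\sum_uf(u)a(v-u)$; $\Delta_a$ acts on all functions $\Lambda\to\bar K$ by $f\mapsto f*a$. The period lattice of $f$ is $\Lambda(f)=\{v\in\Lambda: f(\cdot+v)=f\}$; pluri-periodic means $\Lambda(f)$ has finite index. *)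

(* Defs.v *)
From HB Require Import structures.
From mathcomp Require Import all_boot all_order all_algebra.
From mathcomp Require Import finmap.
Set Implicit Arguments. Unset Strict Implicit. Unset Printing Implicit Defensive.
Import Order.TTheory GRing.Theory Num.Theory.
Local Open Scope ring_scope.

(* The lattice Lambda of rank s is modelled as Z^s = 'rV[int]_s. *)
Notation lat s := 'rV[int]_s.

Notation F0 s F := {fsfun lat s -> F with 0}.

(* Delta_a f = f * a, (f * a)(v) = sum_u f(u) a(v - u)
   = sum_{w in supp a} f(v - w) a(w). *)
Definition Delta (F : fieldType) (s : nat) (a : F0 s F) (f : lat s -> F)
  : lat s -> F :=
  fun v => \sum_(w <- finsupp a) f (v - w) * a w.

Definition in_conv_ideal (F : fieldType) (s l : nat) (a : 'I_l -> F0 s F)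
  (b : F0 s F) : Prop :=
  exists c : 'I_l -> F0 s F,
    forall v, b v = \sum_(j < l) Delta (a j) (fun u => c j u) v.

Definition period_lattice (F : fieldType) (s : nat) (f : lat s -> F)
  : lat s -> Prop :=
  fun v => forall x, f (x + v) = f x.

Definition finite_index (s : nat) (L : lat s -> Prop) : Prop :=
  exists R : seq (lat s), forall v, exists2 r, r \in R & L (v - r).

Definition pluri_periodic (F : fieldType) (s : nat) (f : lat s -> F) : Prop :=
  finite_index (period_lattice f).

(* F is an algebraic closure of GF(p^r): algebraically closed of
   characteristic p, and algebraic over GF(p^r) (each element lies in
   some GF(p^(r n)), n > 0). *)
Definition alg_closure_GF (F : closedFieldType) (p r : nat) : Prop :=
  [/\ prime p, p \in [pchar F], (0 < r)%N &
      forall x : F, exists2 n : nat, (0 < n)%N & x ^+ (p ^ (r * n)) = x].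

(* Main.v *)
Require Import Defs.
From HB Require Import structures.
From mathcomp Require Import all_boot all_order all_algebra.
From mathcomp Require Import finmap.
From mathcomp Require Import ring zify.
Set Implicit Arguments. Unset Strict Implicit. Unset Printing Implicit Defensive.
Import Order.TTheory GRing.Theory Num.Theory.
Local Open Scope ring_scope.

Lemma big_supp2 (T : eqType) (F : fieldType) (s1 s2 : seq T) (h : T -> F) :
  uniq s1 -> uniq s2 -> (forall x, h x != 0 -> x \in s1) ->
  (forall x, h x != 0 -> x \in s2) ->
  \sum_(x <- s1) h x = \sum_(x <- s2) h x.
Proof.
move=> u1 u2 h1 h2.
have E : forall s, \sum_(x <- s) h x = \sum_(x <- filter (fun x => h x != 0) s) h x.
  move=> s; rewrite big_filter [LHS](bigID (fun x => h x != 0)) /=.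
  by rewrite [X in _ + X]big1 ?addr0 // => x /negPn/eqP.
rewrite E [RHS]E; apply: perm_big; apply: uniq_perm; rewrite ?filter_uniq //.
move=> x; rewrite !mem_filter; case hx: (h x != 0) => //=.
by rewrite h1 ?h2.
Qed.

Lemma ideal_kernel (F : fieldType) s l (a : 'I_l -> F0 s F) (b : F0 s F)
  (f : lat s -> F) :
  in_conv_ideal a b -> (forall j, Delta (a j) f = (fun _ => 0)) ->
  forall y, Delta b f y = 0.
Proof.
case=> c hb hf y; rewrite /Delta.
pose X := undup (finsupp b ++ flatten [seq flatten [seq [seq u + w | u <- finsupp (c j)] | w <- finsupp (a j)] | j <- enum 'I_l]).
transitivity (\sum_(x <- X) f (y - x) * b x).
  apply: big_supp2; rewrite ?undup_uniq //.
  move=> x; rewrite mulf_eq0 negb_or => /andP[_ hx].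
  by rewrite mem_finsupp.
  move=> x; rewrite mulf_eq0 negb_or => /andP[_ hx].
  by rewrite mem_undup mem_cat mem_finsupp hx.
under eq_bigr => x _ do rewrite hb mulr_sumr.
rewrite exchange_big /=; apply: big1 => j _.
under eq_bigr => x _ do rewrite /Delta mulr_sumr.
rewrite exchange_big /=.
transitivity (\sum_(w <- finsupp (a j)) \sum_(u <- finsupp (c j))
   c j u * (f ((y - u) - w) * a j w)).
  apply: eq_bigr => w wa.
  transitivity (\sum_(x <- [seq u + w | u <- finsupp (c j)])
     f (y - x) * (c j (x - w) * a j w)).
    apply: big_supp2; rewrite ?undup_uniq //.
    - rewrite map_inj_uniq; [exact: fset_uniq| exact: addIr].
    - move=> x; rewrite !mulf_eq0 !negb_or => /and3P[_ hx hw].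
      rewrite mem_undup mem_cat; apply/orP; right.
      apply/flatten_mapP; exists j; first by rewrite mem_enum.
      apply/flatten_mapP; exists w; first by rewrite mem_finsupp.
      by rewrite -(subrK w x); apply: map_f; rewrite mem_finsupp.
    - move=> x; rewrite !mulf_eq0 !negb_or => /and3P[_ hx _].
      by rewrite -(subrK w x); apply: map_f; rewrite mem_finsupp.
  rewrite big_map; apply: eq_bigr => u _.
  rewrite addrK opprD addrA; ring.
rewrite exchange_big /=; apply: big1 => u _.
rewrite -mulr_sumr.
have := congr1 (fun g => g (y - u)) (hf j); rewrite /Delta /= => ->.
by rewrite mulr0.
Qed.

Lemma pow_cyc (R : ringType) (z : R) k j : z ^+ k.+1 = z -> z ^+ (k * j).+1 = z.
Proof.
move=> hz; elim: j => [|j IH]; first by rewrite muln0 expr1.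
by rewrite mulnS addnC -addSn exprD IH -exprS hz.
Qed.

Lemma roots_cyc (F : closedFieldType) p r (hF : alg_closure_GF F p r) (rs : seq F) :
  exists M : nat, (0 < M)%N /\ forall z, z \in rs -> z ^+ M.+1 = z.
Proof.
case: hF => pp _ r0 hx.
elim: rs => [|z rs [M [M0 HM]]]; first by exists 1%N.
have [n n0 hn] := hx z.
have Q1 : (1 < p ^ (r * n))%N.
  by rewrite -{1}(expn0 p) ltn_exp2l ?prime_gt1 // muln_gt0 r0.
exists (M * (p ^ (r * n)).-1)%N; split; first by rewrite muln_gt0 M0 -ltnS prednK ?(ltnW Q1).
move=> y; rewrite in_cons => /orP[/eqP->|/HM hy].
  by rewrite mulnC; apply: pow_cyc; rewrite prednK ?(ltnW Q1).
exact: pow_cyc.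
Qed.

Lemma dvdp_prod_pow (F : fieldType) (rs : seq F) (q : {poly F}) :
  (forall z, z \in rs -> ('X - z%:P) %| q) ->
  \prod_(z <- rs) ('X - z%:P) %| q ^+ size rs.
Proof.
elim: rs => [|z rs IH] H; first by rewrite big_nil dvd1p.
rewrite big_cons /= exprS; apply: dvdp_mul; first by apply: H; rewrite mem_head.
by apply: IH => y hy; apply: H; rewrite in_cons hy orbT.
Qed.

Lemma poly_cyc (F : closedFieldType) p r (hF : alg_closure_GF F p r) (P : {poly F}) :
  P != 0 -> exists t m : nat, (0 < m)%N /\ P %| 'X^t * ('X^m - 1).
Proof.
move=> P0.
have [rs Dp] := closed_field_poly_normal P.
have [M [M0 HM]] := roots_cyc hF rs.
have hF' := hF; case: hF' => pp pc _ _.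
pose N := (p ^ size rs)%N.
have pcP : p \in [pchar {poly F}] by rewrite pchar_poly.
have natN : [pchar {poly F}].-nat N.
  by rewrite (eq_pnat _ (pcharf_eq pcP)) pnatX pnat_id.
exists N, (M * N)%N; split; first by rewrite muln_gt0 M0 expn_gt0 prime_gt0.
have E : ('X^(M.+1) - 'X) ^+ N = 'X^N * ('X^(M * N) - 1) :> {poly F}.
  rewrite exprDn_pchar // exprNn_pchar // -exprM mulrBr mulr1 -exprD.
  by rewrite mulSn addnC.
rewrite -E Dp dvdpZl ?lead_coef_eq0 //.
apply: dvdp_trans (dvdp_exp2l _ (ltnW (ltn_expl _ (prime_gt1 pp)))).
apply: dvdp_prod_pow => z hz.
by rewrite dvdp_XsubCl /root !hornerE HM // subrr.
Qed.

Definition Lop (F : ringType) (N : nat) (P : {poly F}) (g : int -> F) (n : int) : F :=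
  \sum_(i < N) P`_i * g (n + i%:Z).

Section LopTh.
Variable F : comRingType.
Implicit Types (P Q : {poly F}) (g : int -> F) (n : int).

Lemma LopD N P Q g n : Lop N (P + Q) g n = Lop N P g n + Lop N Q g n.
Proof. by rewrite /Lop -big_split; apply: eq_bigr => i _; rewrite coefD mulrDl. Qed.

Lemma LopB N P Q g n : Lop N (P - Q) g n = Lop N P g n - Lop N Q g n.
Proof.
rewrite /Lop -sumrB; apply: eq_bigr => i _; by rewrite coefB mulrBl.
Qed.

Lemma LopZ N c P g n : Lop N (c *: P) g n = c * Lop N P g n.
Proof. by rewrite /Lop mulr_sumr; apply: eq_bigr => i _; rewrite coefZ mulrA. Qed.

Lemma Lop_sum (I : Type) (rr : seq I) (Fi : I -> {poly F}) N g n :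
  Lop N (\sum_(i <- rr) Fi i) g n = \sum_(i <- rr) Lop N (Fi i) g n.
Proof.
rewrite /Lop; under eq_bigr do rewrite coef_sum mulr_suml.
by rewrite exchange_big.
Qed.

Lemma LopXn N k g n : (k < N)%N -> Lop N 'X^k g n = g (n + k%:Z).
Proof.
move=> hk; rewrite /Lop (bigD1 (Ordinal hk)) //= coefXn eqxx mul1r big1 ?addr0 //.
move=> i hi; rewrite coefXn.
have -> : (i == k :> nat) = false by apply/negbTE; apply: contra hi => /eqP h; apply/eqP/val_inj.
by rewrite mul0r.
Qed.

Lemma Lop_widen N P g n : (size P <= N)%N -> Lop N P g n = Lop (size P) P g n.
Proof.
move=> hN; rewrite /Lop -(subnKC hN) big_split_ord /= [X in _ + X]big1 ?addr0 //.
by move=> i _; rewrite nth_default ?mul0r // leq_addr.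
Qed.

Lemma LopXnM k N P g n : Lop (k + N) ('X^k * P) g n = Lop N P g (n + k%:Z).
Proof.
rewrite /Lop big_split_ord /= big1 ?add0r.
  apply: eq_bigr => i _; rewrite coefXnM ltnNge leq_addr /= addKn.
  by rewrite PoszD addrA.
by move=> i _; rewrite coefXnM ltn_ord mul0r.
Qed.
End LopTh.

Lemma line_periodic (F : closedFieldType) p r (hF : alg_closure_GF F p r) s
  (b : F0 s F) (v : lat s) :
  (exists u, b u != 0) -> (forall w, b w != 0 -> exists k : int, w = k *: v) ->
  exists m : nat, (0 < m)%N /\ forall f : lat s -> F,
    (forall y, Delta b f y = 0) -> forall x, f (x + m%:Z *: v) = f x.
Proof.
move=> [u0 hu0] hsupp.
have kex : forall w : lat s, exists k : int, (b w != 0) ==> (w == k *: v).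
  move=> w; case: (boolP (b w != 0)) => [/hsupp [k ->]|_]; last by exists 0.
  by exists k; rewrite eqxx.
pose k w := xchoose (kex w).
have kP : forall w, b w != 0 -> w = k w *: v.
  by move=> w hw; have /implyP/(_ hw)/eqP := xchooseP (kex w).
pose K : int := \sum_(w <- finsupp b) `|k w|.
have KP : forall w, w \in finsupp b -> 0 <= k w + K.
  move=> w hw; rewrite /K (big_rem w) //=.
  have : 0 <= \sum_(y <- rem w (finsupp b)) `|k y| by apply: sumr_ge0 => i _.
  move: (\sum_(y <- _) _) (k w) => S kw; rewrite -abszE; lia.
pose e w := absz (k w + K).
have eP : forall w, w \in finsupp b -> (e w)%:Z = k w + K.
  by move=> w /KP h; rewrite /e; lia.
have e_inj : forall w w', w \in finsupp b -> w' \in finsupp b -> e w = e w' -> w = w'.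
  move=> w w' hw hw' he.
  have hk : k w = k w' by have := eP w hw; have := eP w' hw'; rewrite he; lia.
  rewrite mem_finsupp in hw; rewrite mem_finsupp in hw'.
  by rewrite (kP w hw) (kP w' hw') hk.
pose P : {poly F} := \sum_(w <- finsupp b) b w *: 'X^(e w).
have coefP : forall w, w \in finsupp b -> P`_(e w) = b w.
  move=> w hw; rewrite /P coef_sum; under eq_bigr do rewrite coefZ coefXn.
  rewrite (big_rem w) //= eqxx mulr1 big_seq big1 ?addr0 // => w' hw'.
  rewrite mem_rem_uniq ?fset_uniq // in hw'; case/andP: hw' => hne hw'.
  case: eqP => [he|]; last by rewrite mulr0.
  by move: hne; rewrite (e_inj _ _ hw hw' he) eqxx.
have hu0' : u0 \in finsupp b by rewrite mem_finsupp.
have P0 : P != 0.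
  by apply: contra hu0 => /eqP P0; rewrite -coefP // P0 coef0.
have eS : forall w, w \in finsupp b -> (e w < size P)%N.
  move=> w hw; rewrite ltnNge; apply/negP => /(nth_default 0) h.
  by have := coefP w hw; rewrite h => hb; move: hw; rewrite mem_finsupp -hb eqxx.
have [t [m [m0 hdiv]]] := poly_cyc hF P0.
exists m; split => // f hf x0.
pose x := x0 + m%:Z *: v.
pose g (n : int) := f (x - n *: v).
have rec : forall n, Lop (size P) P g n = 0.
  move=> n.
  have HL : forall N, (forall w, w \in finsupp b -> (e w < N)%N) ->
      Lop N P g n = \sum_(w <- finsupp b) b w * g (n + (e w)%:Z).
    move=> N hN; rewrite /P Lop_sum; apply: eq_big_seq => w hw.
    by rewrite LopZ LopXn // hN.
  rewrite HL //; apply: etrans (hf (x - (n + K) *: v)); rewrite /Delta; apply: eq_big_seq => w hw.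
  rewrite mulrC /g; congr (f _ * _).
  rewrite eP //.
  have hw' := hw; rewrite mem_finsupp in hw'.
  have -> : n + (k w + K) = (n + K) + k w by ring.
  by rewrite scalerDl opprD addrA -(kP w hw').
move/dvdpP: hdiv => [Q hQ].
have hper : forall n, g (n + t%:Z + m%:Z) = g (n + t%:Z).
  move=> n.
  pose N := ((t + m).+1 + size Q + size P)%N.
  have h1 : Lop N ('X^t * ('X^m - 1)) g n = g (n + (t + m)%N%:Z) - g (n + t%:Z).
    rewrite mulrBr mulr1 -exprD LopB !LopXn //; rewrite /N; lia.
  have h2 : Lop N (Q * P) g n = 0.
    rewrite -[Q]coefK poly_def mulr_suml Lop_sum; apply: big1 => i _.
    have hs : (size ('X^i * P)%R <= i + size P)%N.
      by apply: leq_trans (size_polyMleq _ _) _; rewrite size_polyXn.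
    rewrite -scalerAl LopZ (@Lop_widen _ N _ g n); last first.
      apply: leq_trans hs _; rewrite /N; have := ltn_ord i; lia.
    by rewrite -(Lop_widen _ _ hs) LopXnM rec mulr0.
  move: h1; rewrite hQ h2 => /eqP; rewrite eq_sym subr_eq0 => /eqP.
  by rewrite PoszD addrA.
have := hper (- t%:Z); rewrite addNr add0r /g scale0r subr0 /x addrK.
by move=> ->.
Qed.

Definition Wmx s (v : 'I_s -> lat s) (m : 'I_s -> nat) : 'M[int]_s :=
  \matrix_(j, i) ((m j)%:Z * v j 0 i).

Lemma det_nz s (v : 'I_s -> lat s) (m : 'I_s -> nat)
  (hv : forall c : 'I_s -> int, \sum_(j < s) c j *: v j = 0 -> forall j, c j = 0)
  (hm : forall j, (0 < m j)%N) : \det (Wmx v m) != 0.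
Proof.
apply/negP => /eqP D0.
pose W' := map_mx (intr : int -> rat) (Wmx v m).
have : \det W' == 0 by rewrite det_map_mx D0 rmorph0.
case/det0P => u u0 uW.
pose c j : int := numq (u 0 j) * \prod_(k | k != j) denq (u 0 k).
pose D : rat := (\prod_k denq (u 0 k))%:~R.
have hc : forall j, (c j)%:~R = u 0 j * D.
  move=> j; rewrite /D (bigD1 j) //= /c !intrM numqE; ring.
have hsum : \sum_(j < s) (c j * (m j)%:Z) *: v j = 0.
  apply/matrixP => i0 i; rewrite ord1 mxE summxE.
  apply: (@intr_inj rat); rewrite rmorph_sum /=.
  rewrite (_ : 0%:~R = D * (u *m W') 0 i); last by rewrite uW mxE mulr0.
  rewrite mxE mulr_sumr; apply: eq_bigr => j _; rewrite !mxE; move: (hc j); move: (c j) => cj hcj; rewrite !intrM hcj; ring.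
have hc0 : forall j, c j = 0.
  move=> j; have := hv _ hsum j => /eqP; rewrite mulf_eq0 => /orP[/eqP //|].
  by move=> /eqP[] h; have := hm j; rewrite h.
move/eqP: u0; apply; apply/matrixP => i0 j; rewrite ord1 mxE.
have := hc0 j; rewrite /c => /eqP; rewrite mulf_eq0 numq_eq0 => /orP[/eqP //|].
by rewrite prodf_seq_eq0 => /hasP [k _ /andP[_]]; rewrite denq_eq0.
Qed.

Section Per.
Variables (F : fieldType) (s : nat) (f : lat s -> F).

Lemma per0 : period_lattice f 0.
Proof. by move=> x; rewrite addr0. Qed.

Lemma perD u w : period_lattice f u -> period_lattice f w -> period_lattice f (u + w).
Proof. by move=> hu hw x; rewrite addrA hw hu. Qed.

Lemma perZ w : period_lattice f w -> forall k : int, period_lattice f (k *: w).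
Proof.
move=> hw.
have hn : forall n : nat, period_lattice f (n%:Z *: w).
  elim=> [|n IH] x; first by rewrite scale0r addr0.
  by rewrite -[n.+1]addn1 PoszD scalerDl scale1r addrA hw IH.
case=> n; first exact: hn.
move=> x; rewrite NegzE scaleNr.
by rewrite -{2}(subrK (n.+1%:Z *: w) x) hn.
Qed.

Lemma per_sum (I : Type) (rr : seq I) (P : pred I) (G : I -> lat s) :
  (forall i, P i -> period_lattice f (G i)) ->
  period_lattice f (\sum_(i <- rr | P i) G i).
Proof.
move=> H; apply: (big_ind (period_lattice f)) => //.
  exact: per0.
exact: perD.
Qed.
End Per.

Lemma adj_comb s (v : 'I_s -> lat s) (m : 'I_s -> nat) (x : lat s) :
  \det (Wmx v m) *: x = \sum_(j < s) ((x *m \adj (Wmx v m)) 0 j * (m j)%:Z) *: v j.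
Proof.
rewrite -mul_mx_scalar -mul_adj_mx mulmxA mulmx_sum_row.
apply: eq_bigr => j _; rewrite -scalerA; congr (_ *: _).
by apply/matrixP => i0 i; rewrite ord1 !mxE.
Qed.

Lemma fin_index s (D : int) (L : lat s -> Prop) : D != 0 ->
  (forall z : lat s, L (D *: z)) -> finite_index L.
Proof.
move=> D0 HL.
pose N := absz D.
exists [seq map_mx (fun i : 'I_N.+1 => (i : nat)%:Z) g | g <- enum {: 'rV['I_N.+1]_s}].
move=> y.
pose rho : lat s := \row_i (modz (y 0 i) D).
exists rho.
  apply/mapP; exists (\row_i (inord (absz (modz (y 0 i) D)) : 'I_N.+1)).
    by rewrite mem_enum.
  apply/matrixP => i0 i; rewrite !mxE inordK.
    by rewrite gez0_abs // modz_ge0.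
  have := ltz_mod (y 0 i) D0; have := modz_ge0 (y 0 i) D0; rewrite /N; lia.
have -> : y - rho = D *: \row_i (divz (y 0 i) D).
  apply/matrixP => i0 i; rewrite ord1 !mxE.
  by rewrite {1}(divz_eq (y 0 i) D) addrK mulrC.
exact: HL.
Qed.

Unset Implicit Arguments.
Set Strict Implicit.

Theorem corollary5p7 (F : closedFieldType) (p r s l : nat)
  (hF : alg_closure_GF F p r)
  (a : 'I_l -> F0 s F)
  (b : 'I_s -> F0 s F) (v : 'I_s -> lat s)
  (hbI : forall j, in_conv_ideal a (b j))
  (hb0 : forall j, exists u, b j u != 0)
  (hbsupp : forall j w, b j w != 0 -> exists k : int, w = k *: v j)
  (hv : forall c : 'I_s -> int,
        \sum_(j < s) c j *: v j = 0 -> forall j, c j = 0) :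
  exists m : 'I_s -> nat,
    (forall j, (0 < m j)%N) /\
    forall f : lat s -> F,
      (forall j, Delta (a j) f = (fun _ => 0)) ->
      pluri_periodic f /\
      forall k : 'I_s -> int,
        period_lattice f (\sum_(j < s) (k j * (m j)%:Z) *: v j).
Proof.
have hm : forall j, exists mj : nat, (0 < mj)%N /\ forall f : lat s -> F,
    (forall y, Delta (b j) f y = 0) -> forall x, f (x + mj%:Z *: v j) = f x.
  move=> j; have [mj [h1 h2]] := line_periodic hF (hb0 j) (hbsupp j).
  by exists mj; split => // f hf' x; apply: h2.
have [m Hm] := fin_all_exists hm.
exists m; split; first by move=> j; case: (Hm j).
move=> f hf.
have hper : forall j, period_lattice f ((m j)%:Z *: v j).
  move=> j x; case: (Hm j) => _ H; apply: H => y; exact: ideal_kernel (hbI j) hf y.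
have hk : forall k : 'I_s -> int, period_lattice f (\sum_(j < s) (k j * (m j)%:Z) *: v j).
  move=> k; apply: per_sum => j _; rewrite -scalerA; exact: perZ.
split => //.
apply: (@fin_index _ (\det (Wmx v m))).
  by apply: det_nz => // j; case: (Hm j).
by move=> z; rewrite adj_comb; exact: hk.
Qed.
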